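(* Let $P\in(1,+\infty)$ and let $\mathcal{A}\subset\mathbb{N}^k$ be finite. Then $$\left(\sum_{\mathbf{a}\in\mathcal{A}}\frac{W_{k+1}^P(\mathbf{a})}{a_1\cdots a_k}\right)^{1/P}\left(\frac{1}{(\log2)^k}\sum_{\mathbf{a}\in\mathcal{A}}\frac{L^{(k+1)}(\mathbf{a})}{a_1\cdots a_k}\right)^{1-1/P}\ge\sum_{\mathbf{a}\in\mathcal{A}}\frac{\tau_{k+1}(\mathbf{a})}{a_1\cdots a_k}.$$
   Context: For $\mathbf{a}=(a_1,\dots,a_k)\in\mathbb{N}^k$: $\tau_{k+1}(\mathbf{a})=|\{(d_1,\dots,d_k)\in\mathbb{N}^k: d_1\cdots d_i\mid a_1\cdots a_i\ (1\le i\le k)\}|$; $L^{(k+1)}(\mathbf{a})$ is the $k$-dimensional Lebesgue measure of $\bigcup[\log(d_1/2),\log d_1)\times\cdots\times[\log(d_k/2),\log d_k)$ over all such $(d_1,\dots,d_k)$; and $$W_{k+1}^P(\mathbf{a})=\sum_{\substack{d_1\cdots d_i\mid a_1\cdots a_i\\1\le i\le k}}\left(\sum_{\substack{d_1'\cdots d_i'\mid a_1\cdots a_i\\|\log(d_i'/d_i)|<\log2\\1\le i\le k}}1\right)^{P-1},$$ where all $d_i,d_i'$ are positive integers. *)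

(* Defs.v *)
From HB Require Import structures.
From mathcomp Require Import all_boot all_order all_algebra.
From mathcomp Require Import finmap.
From mathcomp Require Import all_classical all_reals all_analysis.
Set Implicit Arguments. Unset Strict Implicit. Unset Printing Implicit Defensive.
Import Order.TTheory GRing.Theory Num.Theory.
Local Open Scope ring_scope.

Section Defs.
Variable R : realType.
Variable k : nat.

Definition prodA (a : k.-tuple nat) : nat := (\prod_(j < k) tnth a j)%N.

(* Each such d_i divides
   d_1...d_i | a_1...a_k (when all a_j > 0), so d_i <= prodA a and the
   enumeration range 'I_(prodA a).+1 loses no tuple. *)
Definition divtuples (a : k.-tuple nat) : {set {ffun 'I_k -> 'I_(prodA a).+1}} :=
  [set d : {ffun 'I_k -> 'I_(prodA a).+1} | [forall i : 'I_k, 0 < (d i : nat)]%N &&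
           [forall i : 'I_k, (\prod_(j < k | (j <= i)%N) (d j : nat))
                             %| (\prod_(j < k | (j <= i)%N) tnth a j)]%N].

Definition tau (a : k.-tuple nat) : nat := #|divtuples a|.

Definition Wk (P : R) (a : k.-tuple nat) : R :=
  \sum_(d in divtuples a)
    ((#|[set d' in divtuples a |
         [forall i : 'I_k,
            `| ln (((d' i : nat)%:R : R) / (d i : nat)%:R) | < ln 2]]|)%:R)
      `^ (P - 1).

(* Iterated one-dimensional Lebesgue integrals over R^n, points of R^n
   represented as sequences (first coordinate outermost). *)
Fixpoint iter_leb (n : nat) : (seq R -> \bar R) -> \bar R :=
  match n with
  | 0%N => fun f => f [::]
  | n.+1 => fun f =>
      (\int[@lebesgue_measure R]_(x in setT) iter_leb n (fun l => f (x :: l)))%E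
  end.

Definition boxunion (a : k.-tuple nat) : set (seq R) :=
  (fun l => exists2 d, d \in divtuples a &
     forall i : 'I_k, ln (((d i : nat)%:R : R) / 2) <= nth 0 l i
                      /\ nth 0 l i < ln ((d i : nat)%:R)).

Definition Lk (a : k.-tuple nat) : R :=
  fine (iter_leb k (fun l => (\1_(boxunion a) l : R)%:E)).

End Defs.

(* Main.v *)
Require Import Defs.
From HB Require Import structures.
From mathcomp Require Import all_boot all_order all_algebra.
From mathcomp Require Import finmap.
From mathcomp Require Import all_classical all_reals all_analysis.
From mathcomp Require Import ring lra.
Import Order.TTheory GRing.Theory Num.Theory.
Local Open Scope ring_scope.

Section IL.
Variable R : realType.

Fixpoint inbox (n : nat) (lo hi : nat -> R) (l : seq R) : bool :=
  if n is n'.+1 then ((lo 0%N <= head 0 l) && (head 0 l < hi 0%N)) &&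
     inbox n' (fun i => lo i.+1) (fun i => hi i.+1) (behead l) else true.

Fixpoint vol (n : nat) (lo hi : nat -> R) : R :=
  if n is n'.+1 then (hi 0%N - lo 0%N) * vol n' (fun i => lo i.+1) (fun i => hi i.+1) else 1.

Lemma vol_ge0 n lo hi : (forall j, lo j <= hi j) -> 0 <= vol n lo hi.
Proof.
elim: n lo hi => [|n IH] lo hi lh /=; first by [].
by rewrite mulr_ge0 ?subr_ge0 //; apply: IH.
Qed.

Lemma iter_leb_boxes n (I : Type) (s : seq I) (c : I -> R) (lo hi : I -> nat -> R) :
  (forall i, 0 <= c i) -> (forall i j, lo i j <= hi i j) ->
  iter_leb n (fun l => (\sum_(i <- s) c i * (inbox n (lo i) (hi i) l)%:R)%:E) =
  (\sum_(i <- s) c i * vol n (lo i) (hi i))%:E.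
Proof.
elim: n I s c lo hi => [|n IH] I s c lo hi c0 lh /=.
  by congr EFin; apply: eq_bigr => i _; rewrite mulr1.
have E x : (fun l => (\sum_(i <- s) c i * (inbox n.+1 (lo i) (hi i) (x :: l))%:R)%:E) =
   (fun l => (\sum_(i <- s) (c i * ((lo i 0%N <= x) && (x < hi i 0%N))%:R) *
       (inbox n (fun j => lo i j.+1) (fun j => hi i j.+1) l)%:R)%:E).
  apply: funext => l /=; congr EFin; apply: eq_bigr => i _.
  by rewrite -mulrA -natrM mulnb.
transitivity (\int[@lebesgue_measure R]_(x in setT)
   (\sum_(i <- s) ((c i * vol n (fun j => lo i j.+1) (fun j => hi i j.+1)) *
        \1_(`[lo i 0%N, hi i 0%N[%classic) x)%:E)%E)%E.
  apply: eq_integral => x _; rewrite E IH //; last first.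
  - by move=> i; rewrite mulr_ge0.
  rewrite sumEFin; congr EFin; apply: eq_bigr => i _.
  by rewrite indicE mem_setE in_itv /= mulrAC.
rewrite ge0_integral_sum //; last first.
- move=> i x _; rewrite lee_fin mulr_ge0 // mulr_ge0 //; exact: vol_ge0.
- move=> i; apply/measurable_realfun.measurable_EFinP; apply: measurable_realfun.measurable_funM => //.
rewrite -sumEFin; apply: eq_bigr => i _.
under eq_integral do rewrite EFinM.
rewrite ge0_integralZl_EFin //.
all: try (by rewrite mulr_ge0 //; exact: vol_ge0).
all: try (by move=> x _; rewrite lee_fin).
all: try (by apply/measurable_realfun.measurable_EFinP; exact: measurable_realfun.measurable_indic).
rewrite integral_indic // setIT.
have L : (lebesgue_measure (`[lo i 0%N, hi i 0%N[%classic : set R) = (hi i 0%N - lo i 0%N)%:E)%E.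
  rewrite lebesgue_measure_itv /= lte_fin.
  case: ltgtP (lh i 0%N) => //= H _.
  by rewrite H subrr.
transitivity ((c i * vol n (fun j => lo i j.+1) (fun j => hi i j.+1))%:E * (hi i 0%N - lo i 0%N)%:E)%E; first by congr (_ * _)%E; exact: L.
rewrite -EFinM; congr EFin; rewrite -mulrA; congr (_ * _); exact: mulrC.
Qed.
Local Open Scope ereal_scope.
Lemma le_int_ge0 (f g : R -> \bar R) : (forall x, 0 <= f x) -> (forall x, f x <= g x) ->
  \int[@lebesgue_measure R]_(x in setT) f x <= \int[@lebesgue_measure R]_(x in setT) g x.
Proof.
move=> f0 fg; have g0 x : 0 <= g x by apply: le_trans (f0 x) (fg x).
rewrite !ge0_integralTE //=; apply: ereal_sup_le => _ [h hf <-]; exists h => //= x.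
exact: le_trans (hf x) (fg x).
Qed.

Lemma iter_leb_ge0 n (f : seq R -> \bar R) : (forall l, 0 <= f l) -> 0 <= iter_leb n f.
Proof.
elim: n f => [|n IH] f f0 /=; first exact: f0.
by apply: integral_ge0 => x _; apply: IH.
Qed.

Lemma iter_leb_le n (f g : seq R -> \bar R) : (forall l, 0 <= f l) -> (forall l, f l <= g l) ->
  iter_leb n f <= iter_leb n g.
Proof.
elim: n f g => [|n IH] f g f0 fg /=; first exact: fg.
apply: le_int_ge0 => x; first by apply: iter_leb_ge0.
by apply: IH.
Qed.
End IL.
Lemma inv_le_nat (R : realFieldType) (m n : nat) : (0 < m)%N -> (m <= n)%N ->
  (n%:R : R)^-1 <= (m%:R)^-1.
Proof.
move=> m0 mn; rewrite lef_pV2 ?posrE ?ltr0n ?ler_nat //.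
exact: leq_trans mn.
Qed.

Lemma caro_wei (R : realFieldType) (T : finType) (r : rel T) :
  symmetric r -> reflexive r -> forall S : {set T}, exists I : {set T},
  [/\ I \subset S, (forall x y, x \in I -> y \in I -> x != y -> ~~ r x y) &
   \sum_(x in S) ((#|[set y in S | r x y]|)%:R)^-1 <= (#|I|%:R : R)].
Proof.
move=> rs rr S; have [n] := ubnP #|S|; elim: n S => // n IH S ltS.
case: (set_0Vmem S) => [-> | [x1 x1S]].
  exists finset.set0; split; first exact: finset.sub0set.
    by move=> x y; rewrite inE.
  by rewrite big_set0 cards0.
pose N (A : {set T}) x := [set y in A | r x y].
have NxA (A : {set T}) x : x \in A -> (0 < #|N A x|)%N.
  by move=> xA; apply/card_gt0P; exists x; rewrite inE xA rr.
pose x0 := [arg min_(x < x1 in S) #|N S x|].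
have [x0S minx0] : x0 \in S /\ forall x, x \in S -> (#|N S x0| <= #|N S x|)%N.
  by rewrite /x0; case: arg_minnP.
set U := N S x0.
set S' := S :\: U.
have x0U : x0 \in U by rewrite inE x0S rr.
have S'S : S' \subset S by apply: subsetDl.
have ltS' : (#|S'| < n)%N.
  have : S' \subset S :\ x0.
    apply/fintype.subsetP => y; rewrite !finset.inE => /andP[yU yS]; rewrite yS andbT.
    by apply/eqP => E; move/negP: yU; apply; rewrite E x0S rr.
  move/subset_leq_card => H; rewrite -ltnS; apply: leq_trans ltS.
  by rewrite (cardsD1 x0 S) x0S add1n ltnS.
have [I' [I'S' indep Hs']] := IH S' ltS'.
have x0I' : x0 \notin I'.
  by apply: contraTN x0U => /(fintype.subsetP I'S'); rewrite inE => /andP[].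
exists (x0 |: I'); split.
- apply/fintype.subsetP => y; rewrite in_setU1 => /predU1P [->|/(fintype.subsetP I'S')] //.
  by rewrite inE => /andP[].
- have key y : y \in I' -> ~~ r x0 y.
    move=> /(fintype.subsetP I'S'); rewrite !finset.inE => /andP[]; rewrite negb_and => /orP[] //.
    by move=> /negP H /H.
  move=> x y; rewrite !in_setU1 => /predU1P[->|xI] /predU1P[->|yI].
  + by rewrite eqxx.
  + by move=> _; apply: key.
  + by move=> _; rewrite rs; apply: key.
  + exact: indep.
rewrite cardsU1 x0I' add1n -nat1r.
rewrite (bigID (mem U)) /=; apply: lerD.
  rewrite (eq_bigl (mem U)) /=; last first.
    move=> x; apply/andP/idP => [[]//|xU]; split => //.
    have : x \in U by exact: xU.
    by rewrite finset.inE => /andP[].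
  apply: le_trans (_ : \sum_(x in U) (#|U|%:R : R)^-1 <= _).
    apply: ler_sum => x xU; apply: inv_le_nat; first exact: NxA.
    by apply: minx0; move: xU; rewrite finset.inE => /andP[].
  rewrite sumr_const -[X in X <= _]mulr_natr mulVf // pnatr_eq0 -lt0n; exact: NxA.
apply: le_trans Hs'.
rewrite (eq_bigl (mem S')) /=; last by move=> x; rewrite !inE andbC.
apply: ler_sum => x xS'; apply: inv_le_nat; first exact: NxA.
apply: subset_leq_card; apply/fintype.subsetP => y; rewrite !finset.inE => /andP[yS' ->].
by rewrite andbT; case/andP: yS'.
Qed.
Lemma young_pt (R : realType) (P A B N w : R) : 1 < P -> 0 < A -> 0 < B -> 1 <= N -> 0 <= w ->
  w <= (w * N `^ (P - 1) * (P * A)^-1 + w * N^-1 * ((1 - P^-1)^-1 * B)^-1) *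
       (A `^ P^-1 * B `^ (1 - P^-1)).
Proof.
move=> P1 A0 B0 N1 w0.
have P0 : 0 < P by apply: lt_trans P1.
have N0 : 0 < N by apply: lt_le_trans N1.
have s0 : 0 < 1 - P^-1 by rewrite subr_gt0 invf_lt1.
set s := 1 - P^-1.
set q := s^-1.
have q0 : 0 < q by rewrite invr_gt0.
have pq : P^-1 + q^-1 = 1 by rewrite invrK /s addrC subrK.
set x := N `^ (P - 1) / A.
set y := N^-1 / B.
have x0 : 0 <= x by rewrite divr_ge0 ?powR_ge0 ?ltW.
have y0 : 0 <= y by rewrite divr_ge0 ?invr_ge0 ?ltW.
have := conjugate_powR (powR_ge0 x P^-1) (powR_ge0 y q^-1) P0 q0 pq.
rewrite -!powRrM !mulVf ?gt_eqF // !powRr1 //.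
move=> H.
have key : x `^ P^-1 * y `^ q^-1 * (A `^ P^-1 * B `^ s) = 1.
  rewrite /q invrK mulrACA -(powRM _ x0 (ltW A0)) -(powRM _ y0 (ltW B0)).
  rewrite /x /y !divfK ?gt_eqF // -powRrM -(powR_inv1 (ltW N0)) -powRrM.
  rewrite mulN1r powRN (_ : (P - 1) / P = s) ?mulfV ?gt_eqF ?powR_gt0 //.
  by rewrite /s mulrBl mulfV ?gt_eqF // mul1r.
set X := (A `^ P^-1 * B `^ s).
have X0 : 0 <= X by rewrite mulr_ge0 ?powR_ge0.
apply: (le_trans (_ : w <= w * (x `^ P^-1 * y `^ q^-1 * X))); first by rewrite key mulr1.
rewrite mulrA ler_wpM2r //.
apply: le_trans (ler_wpM2l w0 H) _.
rewrite /x /y /q invrK le_eqVlt; apply/orP; left; apply/eqP; field.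
by rewrite !gt_eqF.
Qed.
Arguments inbox {R}.
Arguments vol {R}.
Section Per.
Variable R : realType.

Lemma inboxE n lo hi (l : seq R) :
  inbox n lo hi l <-> (forall j, (j < n)%N -> lo j <= nth 0 l j < hi j).
Proof.
elim: n lo hi l => [|n IH] lo hi l /=; first by split.
have h0 : head 0 l = nth 0 l 0 by case: l.
have hS j : nth 0 (behead l) j = nth 0 l j.+1 by case: (l) => //= ; rewrite !nth_nil.
rewrite h0; split.
  move=> /andP[H0 /IH H] [|j] //= jn.
  by rewrite -hS; apply: H.
move=> H; apply/andP; split; first exact: H.
by apply/IH => j jn; rewrite hS; apply: H.
Qed.

Lemma vol_prod n lo hi : vol n lo hi = \prod_(j < n) (hi j - lo j) :> R.
Proof.
elim: n lo hi => [|n IH] lo hi /=; first by rewrite big_ord0.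
by rewrite big_ord_recl IH.
Qed.

Lemma ln_sym (m n : nat) : `|ln ((m%:R : R) / n%:R)| = `|ln ((n%:R : R) / m%:R)|.
Proof.
case: (posnP m) => [->|m0]; first by rewrite mul0r invr0 mulr0.
case: (posnP n) => [->|n0]; first by rewrite mul0r invr0 mulr0.
by rewrite !ln_div ?posrE ?ltr0n // distrC.
Qed.

Lemma ln_half_le (m : nat) : ln ((m%:R : R) / 2) <= ln (m%:R).
Proof.
case: (posnP m) => [->|m0]; first by rewrite mul0r.
rewrite ler_ln ?posrE ?divr_gt0 ?ltr0n //.
by rewrite ler_pdivrMr // ler_peMr // ler1n.
Qed.

Lemma ln_half (m : nat) : (0 < m)%N -> ln ((m%:R : R) / 2) = ln m%:R - ln 2.
Proof. by move=> m0; rewrite ln_div ?posrE ?ltr0n. Qed.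

Variable k : nat.
Variable a : k.-tuple nat.

Definition T := {ffun 'I_k -> 'I_(prodA a).+1}.
Definition S : {set T} := divtuples a.
Definition rr : rel T := fun x y =>
  [forall i : 'I_k, `|ln (((y i : nat)%:R : R) / (x i : nat)%:R)| < ln 2].

Lemma rr_sym : symmetric rr.
Proof. by move=> x y; apply: eq_forallb => i; rewrite ln_sym. Qed.

Lemma ln2_gt0 : 0 < ln (2 : R).
Proof. by rewrite ln_gt0 // ltr1n. Qed.

Lemma rr_refl : reflexive rr.
Proof.
move=> x; apply/forallP => i.
case: (posnP (x i : nat)) => [->|m0]; first by rewrite mul0r ln0 ?normr0 ?ln2_gt0.
by rewrite mulfV ?pnatr_eq0 -?lt0n // ln1 normr0 ln2_gt0.
Qed.

Lemma S_pos d : d \in S -> forall i, (0 < (d i : nat))%N.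
Proof. by rewrite /S /divtuples inE => /andP[/forallP H _]. Qed.

Definition dn (d : T) (j : nat) : nat := oapp (fun i : 'I_k => (d i : nat)) 0%N (insub j).
Definition lo (d : T) (j : nat) : R := ln ((dn d j)%:R / 2).
Definition hi (d : T) (j : nat) : R := ln ((dn d j)%:R).

Lemma dnE d (i : 'I_k) : dn d i = d i.
Proof. by rewrite /dn valK. Qed.

Lemma lohi d j : lo d j <= hi d j.
Proof. exact: ln_half_le. Qed.

Lemma vol_d d : d \in S -> vol k (lo d) (hi d) = ln 2 ^+ k.
Proof.
move=> dS; rewrite vol_prod -[in RHS](card_ord k) -prodr_const.
apply: eq_bigr => i _; rewrite /lo /hi dnE ln_half ?S_pos //.
by rewrite opprB addrC subrK.
Qed.

Lemma inbox_d d (l : seq R) : inbox k (lo d) (hi d) l <->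
  (forall i : 'I_k, ln (((d i : nat)%:R : R) / 2) <= nth 0 l i /\ nth 0 l i < ln ((d i : nat)%:R)).
Proof.
rewrite inboxE; split.
  by move=> H i; have /andP[] := H i (ltn_ord i); rewrite /lo /hi dnE.
move=> H j jk; have [] := H (Ordinal jk).
by rewrite /lo /hi -(dnE d (Ordinal jk)) => -> ->.
Qed.

Lemma conflict d d' (l : seq R) : d \in S -> d' \in S ->
  inbox k (lo d) (hi d) l -> inbox k (lo d') (hi d') l -> rr d d'.
Proof.
move=> dS d'S /inbox_d H /inbox_d H'; apply/forallP => i.
have [h1 h2] := H i; have [h3 h4] := H' i.
move: h1 h3; rewrite !ln_half ?S_pos // => h1 h3.
rewrite ln_div ?posrE ?ltr0n ?S_pos // ltr_norml; apply/andP; split; lra.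
Qed.


Lemma boxunionE (l : seq R) : boxunion a l <-> exists2 d, d \in S & inbox k (lo d) (hi d) l.
Proof.
split.
  by move=> [d dS H]; exists d => //; apply/inbox_d => i; apply: H.
by move=> [d dS /inbox_d H]; exists d.
Qed.

Lemma Lk_ge (I : {set T}) : I \subset S ->
  (forall x y, x \in I -> y \in I -> x != y -> ~~ rr x y) ->
  #|I|%:R * ln 2 ^+ k <= Lk R a.
Proof.
move=> IS indep.
set X := iter_leb k (fun l => (\1_(boxunion a) l : R)%:E).
have Xup : (X <= (#|S|%:R * ln 2 ^+ k)%:E)%E.
  apply: (le_trans (@iter_leb_le R k _ (fun l => (\sum_(d <- enum S) 1 * (inbox k (lo d) (hi d) l)%:R)%:E) _ _)).
  - by move=> l; rewrite lee_fin indicE.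
  - move=> l; rewrite lee_fin indicE.
    case: (boolP (l \in boxunion a)) => [|_]; last by rewrite sumr_ge0 // => d _; rewrite mul1r.
    rewrite inE => /boxunionE [d dS dl].
    rewrite big_enum (bigD1 d) //= dl mulr1 lerDl sumr_ge0 // => d' _.
  rewrite iter_leb_boxes //; last by move=> d j; apply: lohi.
  rewrite lee_fin big_enum /= (eq_bigr (fun _ => ln 2 ^+ k)); last first.
    by move=> d dS; rewrite mul1r vol_d.
  by rewrite sumr_const mulr_natl.
have Xlo : ((#|I|%:R * ln 2 ^+ k)%:E <= X)%E.
  apply: (le_trans _ (@iter_leb_le R k (fun l => (\sum_(d <- enum I) 1 * (inbox k (lo d) (hi d) l)%:R)%:E) _ _ _)).
  - rewrite iter_leb_boxes //; last by move=> d j; apply: lohi.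
    rewrite lee_fin big_enum /= (eq_bigr (fun _ => ln 2 ^+ k)); last first.
      by move=> d dI; rewrite mul1r vol_d // (fintype.subsetP IS).
    by rewrite sumr_const mulr_natl.
  - by move=> l; rewrite lee_fin sumr_ge0 // => d _; rewrite mul1r.
  - move=> l; rewrite lee_fin indicE big_enum /=.
    case: (pselect (exists2 d, d \in I & inbox k (lo d) (hi d) l)) => [[d dI dl]|N].
      have -> : l \in boxunion a.
        by rewrite inE; apply/boxunionE; exists d => //; apply: (fintype.subsetP IS).
      rewrite (bigD1 d) //= dl mulr1 big1 ?addr0 // => d' /andP[d'I nd].
      case: (boolP (inbox k (lo d') (hi d') l)) => [d'l|]; last by rewrite mulr0.
      have := indep d d' dI d'I; rewrite eq_sym nd => /(_ isT) /negP; case.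
      exact: (conflict d d' l (fintype.subsetP IS _ dI) (fintype.subsetP IS _ d'I) dl d'l).
    rewrite big1 // => d dI; case: (boolP (inbox k (lo d) (hi d) l)) => [dl|]; last by rewrite mulr0.
    by case: N; exists d.
have Xfin : X \is a fin_num.
  rewrite ge0_fin_numE; last by apply: iter_leb_ge0 => l; rewrite lee_fin indicE.
  by apply: le_lt_trans Xup _; rewrite ltry.
by rewrite /Lk -/X -lee_fin fineK.
Qed.

End Per.
Lemma sum_term_le (R : realType) (I : eqType) (s : seq I) (F : I -> R) x :
  (forall y, 0 <= F y) -> x \in s -> F x <= \sum_(y <- s) F y.
Proof.
move=> F0 xs; rewrite (big_rem x xs) /= lerDl sumr_ge0 //.
Qed.

Lemma ler_sum_in (R : numDomainType) (I : eqType) (s : seq I) (F G : I -> R) :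
  (forall i, i \in s -> F i <= G i) -> \sum_(i <- s) F i <= \sum_(i <- s) G i.
Proof.
elim: s => [|x s IH] H; first by rewrite !big_nil.
rewrite !big_cons lerD ?H ?mem_head // IH // => i iS; apply: H.
by rewrite in_cons iS orbT.
Qed.

Theorem lemma6p1 (R : realType) (k : nat) (P : R) (A : {fset (k.-tuple nat)}) :
  1 < P ->
  (forall a, a \in A -> forall i : 'I_k, (0 < tnth a i)%N) ->
  (\sum_(a <- A) (tau a)%:R / (prodA a)%:R)
    <= (\sum_(a <- A) Wk P a / (prodA a)%:R) `^ (P^-1)
       * ((ln (2 : R) ^+ k)^-1 * \sum_(a <- A) Lk R a / (prodA a)%:R) `^ (1 - P^-1).
Proof.
move=> P1 apos.
have P0 : 0 < P by apply: lt_trans P1.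
have s0 : 0 < 1 - P^-1 by rewrite subr_gt0 invf_lt1.
pose c : R := ln 2 ^+ k.
have c0 : 0 < c by rewrite exprn_gt0 // ln2_gt0.
pose Nn (a : k.-tuple nat) (d : T k a) : R := #|[set y in S k a | rr R k a d y]|%:R.
have N1 a d : d \in S k a -> 1 <= Nn a d.
  move=> dS; rewrite ler1n; apply/card_gt0P; exists d.
  by rewrite finset.inE dS rr_refl.
have F1 a : (tau a)%:R / (prodA a)%:R = \sum_(d in S k a) ((prodA a)%:R)^-1.
  by rewrite sumr_const -(mulr_natl ((prodA a)%:R)^-1).
have F2 a : Wk P a / (prodA a)%:R = \sum_(d in S k a) ((prodA a)%:R)^-1 * Nn a d `^ (P - 1).
  by rewrite /Wk mulr_suml; apply: eq_bigr => d _; rewrite mulrC.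
have F3 a : c * \sum_(d in S k a) ((prodA a)%:R)^-1 * (Nn a d)^-1 <= Lk R a / (prodA a)%:R.
  have [I [IS indep HI]] := caro_wei R (T k a) (rr R k a) (rr_sym R k a) (rr_refl R k a) (S k a).
  move: (Lk_ge R k a I IS indep) => HL.
  rewrite -mulr_sumr mulrCA [Lk R a / (prodA a)%:R]mulrC; apply: ler_wpM2l; first by rewrite invr_ge0.
  apply: le_trans HL; rewrite [c * _]mulrC; rewrite /c; apply: ler_wpM2r; [exact: ltW c0 | exact: HI].
set Atot := \sum_(a <- A) Wk P a / (prodA a)%:R.
set Lt := \sum_(a <- A) Lk R a / (prodA a)%:R.
pose Btot := \sum_(a <- A) \sum_(d in S k a) ((prodA a)%:R)^-1 * (Nn a d)^-1.
have pinv0 a : 0 <= ((prodA a)%:R)^-1 by rewrite invr_ge0.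
have Nn0 a d : 0 <= Nn a d by [].
have B0 : 0 <= Btot.
  by apply: sumr_ge0 => a _; apply: sumr_ge0 => d _; rewrite mulr_ge0 ?invr_ge0.
have A0 : 0 <= Atot.
  by apply: sumr_ge0 => a _; rewrite F2; apply: sumr_ge0 => d _; rewrite mulr_ge0 ?powR_ge0.
have BL : Btot <= c^-1 * Lt.
  rewrite /Lt mulr_sumr; apply: ler_sum => a _.
  by rewrite ler_pdivlMl //; apply: F3.
set X := Atot `^ P^-1 * Btot `^ (1 - P^-1).
have X0 : 0 <= X by rewrite mulr_ge0 ?powR_ge0.
apply: (@le_trans _ _ X); last first.
  apply: ler_wpM2l; first exact: powR_ge0.
  apply: ge0_ler_powR; [exact: ltW | by rewrite nnegrE | | exact: BL].
  by rewrite nnegrE; apply: le_trans BL.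
rewrite (eq_bigr (fun a => \sum_(d in S k a) ((prodA a)%:R)^-1)); last by move=> a _; exact: F1.
pose q : R := (1 - P^-1)^-1.
apply: (@le_trans _ _ (\sum_(a <- A) \sum_(d in S k a)
   ((((prodA a)%:R)^-1 * Nn a d `^ (P - 1) * (P * Atot)^-1 +
     ((prodA a)%:R)^-1 * (Nn a d)^-1 * (q * Btot)^-1) * X))).
  apply: ler_sum_in => a aA; apply: ler_sum => d dS.
  have p0 : 0 < ((prodA a)%:R : R)^-1.
    by rewrite invr_gt0 ltr0n prodn_gt0 // => i; apply: apos.
  have Ng0 : 0 < Nn a d by apply: lt_le_trans (N1 a d dS).
  apply: young_pt => //; last exact: N1.
    apply: lt_le_trans (_ : ((prodA a)%:R)^-1 * Nn a d `^ (P - 1) <= _).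
      by rewrite mulr_gt0 // powR_gt0.
    apply: le_trans (_ : Wk P a / (prodA a)%:R <= _); last first.
      apply: (@sum_term_le R _ _ (fun a => Wk P a / (prodA a)%:R) a) => // y.
      by rewrite F2; apply: sumr_ge0 => d' _; rewrite mulr_ge0 ?powR_ge0.
    rewrite F2 (bigD1 d) //= lerDl sumr_ge0 // => d' _.
    by rewrite mulr_ge0 ?powR_ge0.
  apply: lt_le_trans (_ : ((prodA a)%:R)^-1 * (Nn a d)^-1 <= _).
    by rewrite mulr_gt0 // invr_gt0.
  apply: le_trans (_ : \sum_(d in S k a) ((prodA a)%:R)^-1 * (Nn a d)^-1 <= _); last first.
    apply: (@sum_term_le R _ _ (fun a => \sum_(d in S k a) ((prodA a)%:R)^-1 * (Nn a d)^-1) a) => // y.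
    by apply: sumr_ge0 => d' _; rewrite mulr_ge0 ?invr_ge0.
  rewrite (bigD1 d) //= lerDl sumr_ge0 // => d' _.
  by rewrite mulr_ge0 ?invr_ge0.
have E : \sum_(a <- A) \sum_(d in S k a)
   ((((prodA a)%:R)^-1 * Nn a d `^ (P - 1) * (P * Atot)^-1 +
     ((prodA a)%:R)^-1 * (Nn a d)^-1 * (q * Btot)^-1) * X) =
   (Atot * (P * Atot)^-1 + Btot * (q * Btot)^-1) * X.
  rewrite mulrDl /Atot /Btot !mulr_suml -big_split /=; apply: eq_bigr => a _.
  rewrite F2 !mulr_suml -big_split /=; apply: eq_bigr => d _.
  by rewrite mulrDl.
rewrite E; apply: ler_piMl => //.
have H1 (Z W : R) : 0 < W -> Z * (W * Z)^-1 <= W^-1.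
  move=> W0; have [->|Z0] := eqVneq Z 0; first by rewrite mul0r invr_ge0 ltW.
  by rewrite invfM mulrCA mulfV // mulr1.
apply: le_trans (lerD (H1 _ _ P0) (H1 Btot q _)) _.
  by rewrite invr_gt0.
by rewrite /q invrK addrC subrK.
Qed.
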